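(* Let $n\ge2$, $\alpha\in\mathbb{Z}_2^{n-1}$ and write $\alpha0=(\alpha_0,\dots,\alpha_{n-2},0)\in\mathbb{Z}_2^n$. Then $$\max_{\beta,\gamma\in\mathbb{Z}_2^n}\mathrm{adp}^{\mathrm{XR}}_{n-1}(\alpha0,\beta\to\gamma)=\mathrm{adp}^{\oplus}(\alpha0,\alpha0\to0)=\max_{\beta,\gamma\in\mathbb{Z}_2^n}\mathrm{adp}^{\oplus}(\alpha0,\beta\to\gamma).$$
   Context: For $x\in\mathbb{Z}_2^n$, $x=(x_0,\dots,x_{n-1})$ is identified with the integer $\sum_i x_i2^{n-1-i}$ ($x_0$ most significant); $+$ is addition modulo $2^n$, $\oplus$ is bitwise XOR, $x\lll r=(x_r,\dots,x_{n-1},x_0,\dots,x_{r-1})$. For $f:(\mathbb{Z}_2^n)^2\to\mathbb{Z}_2^n$, $\mathrm{adp}^f(\alpha,\beta\to\gamma)=4^{-n}\#\{(x,y): f(x+\alpha,y+\beta)=f(x,y)+\gamma\}$. $\mathrm{adp}^{\oplus}$ is this for $f(x,y)=x\oplus y$, and $\mathrm{adp}^{\mathrm{XR}}_r$ for $f(x,y)=(x\oplus y)\lll r$. *)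

(* Defs.v *)
From mathcomp Require Import all_boot all_order all_algebra.
Set Implicit Arguments. Unset Strict Implicit. Unset Printing Implicit Defensive.
Import Order.TTheory GRing.Theory Num.Theory.

(* Z_2^n : bit vectors x = (x_0, ..., x_{n-1}), x_0 most significant. *)
Definition bv (n : nat) := {ffun 'I_n -> bool}.

Definition toNat n (x : bv n) : nat := \sum_(i < n) (x i : nat) * 2 ^ (n.-1 - i).

Definition ofNat n (m : nat) : bv n := [ffun i : 'I_n => odd (m %/ 2 ^ (n.-1 - i))].

Definition addm n (x y : bv n) : bv n := ofNat n ((toNat x + toNat y) %% 2 ^ n).

Definition bxor n (x y : bv n) : bv n := [ffun i => x i (+) y i].

Definition rotl n (x : bv n) (r : nat) : bv n :=
  [ffun i : 'I_n => x (insubd i ((i + r) %% n))].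

Definition adp n (f : bv n -> bv n -> bv n) (a b c : bv n) : rat :=
  (#|[set p : bv n * bv n | f (addm p.1 a) (addm p.2 b) == addm (f p.1 p.2) c]|%:R
   / (4 ^ n)%:R)%R.

Definition adp_xor n := adp (@bxor n).
Definition adp_XR n (r : nat) := adp (fun x y : bv n => rotl (bxor x y) r).

(* alpha0 = (alpha_0, ..., alpha_{n-2}, 0) for alpha in Z_2^{n-1} *)
Definition ext0 n (a : bv n.-1) : bv n :=
  [ffun i : 'I_n => oapp a false (insub (val i) : option 'I_n.-1)].

Definition zero_bv n : bv n := [ffun => false].

Definition is_max_of (T : Type) (g : T -> rat) (v : rat) : Prop :=
  (exists t, g t = v) /\ (forall t, (g t <= v)%R).

(* Main.v *)
Require Import Defs.
From mathcomp Require Import all_boot all_order all_algebra.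
From mathcomp Require Import zify.
Set Implicit Arguments. Unset Strict Implicit. Unset Printing Implicit Defensive.

Definition hi n (x : bv n.+1) : bv n := [ffun i : 'I_n => x (widen_ord (leqnSn n) i)].
Definition lo n (x : bv n.+1) : bool := x ord_max.

Lemma toNat_split n (x : bv n.+1) : toNat x = lo x + (toNat (hi x)).*2.
Proof.
rewrite /toNat big_ord_recr /= subnn expn0 muln1 addnC; congr (_ + _).
rewrite -mul2n big_distrr /=; apply: eq_bigr => i _; rewrite ffunE.
have -> : n - i = (n.-1 - i).+1 by have := ltn_ord i; lia.
by rewrite expnS mulnCA.
Qed.

Lemma ofNat_hi n m : hi (ofNat n.+1 m) = ofNat n m./2.
Proof.
apply/ffunP => i; rewrite !ffunE /=.
have -> : n - i = (n.-1 - i).+1 by have := ltn_ord i; lia.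
by rewrite -divn2 -divnMA -expnS.
Qed.

Lemma ofNat_lo n m : lo (ofNat n.+1 m) = odd m.
Proof. by rewrite /lo ffunE /= subnn expn0 divn1. Qed.

Lemma bv_split_eq n (x y : bv n.+1) : hi x = hi y -> lo x = lo y -> x = y.
Proof.
move=> /ffunP H Hl; apply/ffunP => i; case: (ltnP i n) => Hi.
  have := H (Ordinal Hi); rewrite !ffunE.
  by have -> : widen_ord (leqnSn n) (Ordinal Hi) = i by apply: val_inj.
have -> : i = ord_max by apply: val_inj => /=; have := ltn_ord i; lia.
exact Hl.
Qed.

Lemma L1 (b : bool) q P : 0 < P -> (b + q.*2) %% (2 * P) = b + (q %% P).*2.
Proof.
move=> P0.
have E : b + q.*2 = q %/ P * (2 * P) + (b + (q %% P).*2).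
  rewrite {1}(divn_eq q P) -!mul2n; set d := q %/ P; set r := q %% P; nia.
rewrite E modnMDl modn_small //.
have := ltn_pmod q P0; clear E; case: b => /=; rewrite -mul2n; lia.
Qed.

Lemma toNat_ofNat n m : toNat (ofNat n m) = m %% 2^n.
Proof.
elim: n m => [|n IH] m.
  by rewrite /toNat big_ord0 expn0 modn1.
rewrite toNat_split ofNat_hi ofNat_lo IH -{3}(odd_double_half m) expnS L1 //.
by rewrite expn_gt0.
Qed.

Lemma ofNat_toNat n (x : bv n) : ofNat n (toNat x) = x.
Proof.
elim: n x => [|n IH] x.
  by apply/ffunP => -[].
apply: bv_split_eq.
  by rewrite ofNat_hi toNat_split half_bit_double IH.
by rewrite ofNat_lo toNat_split oddD odd_double addbF oddb.
Qed.

Lemma toNat_lt n (x : bv n) : toNat x < 2^n.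
Proof.
have := toNat_ofNat n (toNat x); rewrite ofNat_toNat => ->.
by rewrite ltn_pmod // expn_gt0.
Qed.

Lemma toNat_inj n : injective (@toNat n).
Proof. exact: can_inj (@ofNat_toNat n). Qed.

Lemma hi_bxor n (x y : bv n.+1) : hi (bxor x y) = bxor (hi x) (hi y).
Proof. by apply/ffunP => i; rewrite !ffunE. Qed.

Lemma lo_bxor n (x y : bv n.+1) : lo (bxor x y) = lo x (+) lo y.
Proof. by rewrite /lo ffunE. Qed.

Definition nx n u v := toNat (bxor (ofNat n u) (ofNat n v)).

Lemma nxS n (p q : bool) u v : nx n.+1 (p + u.*2) (q + v.*2) = (p (+) q) + (nx n u v).*2.
Proof.
rewrite /nx toNat_split hi_bxor lo_bxor !ofNat_hi !ofNat_lo !half_bit_double.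
by rewrite !oddD !odd_double !addbF !oddb.
Qed.
Lemma addmod n (p : bool) x a :
  (p + x.*2 + a) %% 2^n.+1 = (p (+) odd a) + ((x + (a./2 + (p && odd a))) %% 2^n).*2.
Proof.
rewrite expnS.
have -> : p + x.*2 + a = (p (+) odd a) + (x + (a./2 + (p && odd a))).*2.
  rewrite -{1}(odd_double_half a); case: p; case: (odd a) => /=; rewrite -!mul2n; lia.
by rewrite L1 // expn_gt0.
Qed.


Lemma eq_bd (s t : bool) A B : (s + A.*2 == t + B.*2) = (s == t) && (A == B).
Proof.
apply/eqP/andP => [H | [/eqP -> /eqP -> //]].
have Ho := congr1 odd H; rewrite !oddD !odd_double !addbF !oddb in Ho.
split; first by apply/eqP.
by move: H; rewrite Ho => /addnI/double_inj ->.
Qed.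

Definition Pn n a b g x y : bool :=
  nx n ((x + a) %% 2^n) ((y + b) %% 2^n) == (nx n x y + g) %% 2^n.

Definition Nn n a b g := \sum_(x < 2^n) \sum_(y < 2^n) (Pn n a b g x y : nat).

Lemma PnS n a b g (p q : bool) x y :
  Pn n.+1 a b g (p + x.*2) (q + y.*2) =
  ~~ (odd a (+) odd b (+) odd g) &&
  Pn n (a./2 + (p && odd a)) (b./2 + (q && odd b)) (g./2 + ((p (+) q) && odd g)) x y.
Proof.
rewrite /Pn. rewrite !addmod !nxS addmod eq_bd !addnA; congr (_ && _).
by case: p; case: q; case: (odd a); case: (odd b); case: (odd g).
Qed.

Lemma sum_peel (F : nat -> nat) n :
  \sum_(x < 2^n.+1) F x = \sum_(x < 2^n) \sum_(p : bool) F (p + x.*2).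
Proof.
rewrite expnS mul2n; elim: (2^n) => [|m IH]; first by rewrite !big_ord0.
rewrite doubleS !big_ord_recr /= IH big_bool /= -!addnA; congr (_ + _).
by rewrite add0n add1n addnC.
Qed.

Lemma sum_swap4 M (G : bool -> bool -> nat -> nat -> nat) :
  \sum_(x < M) \sum_(p : bool) \sum_(y < M) \sum_(q : bool) G p q x y =
  \sum_(p : bool) \sum_(q : bool) \sum_(x < M) \sum_(y < M) G p q x y.
Proof.
rewrite (eq_bigr (fun x : 'I_M => \sum_(p : bool) \sum_(q : bool) \sum_(y < M) G p q x y)).
  rewrite exchange_big; apply: eq_bigr => p _; exact: exchange_big.
move=> x _; apply: eq_bigr => p _; exact: exchange_big.
Qed.

Lemma NnS n a b g : Nn n.+1 a b g =
  ~~ (odd a (+) odd b (+) odd g) *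
  \sum_(p : bool) \sum_(q : bool)
     Nn n (a./2 + (p && odd a)) (b./2 + (q && odd b)) (g./2 + ((p (+) q) && odd g)).
Proof.
rewrite /Nn (sum_peel (fun x => \sum_(y < 2^n.+1) (Pn n.+1 a b g x y : nat))).
rewrite (eq_bigr (fun x : 'I_(2^n) => \sum_(p : bool) \sum_(y < 2^n) \sum_(q : bool)
   (Pn n.+1 a b g (p + x.*2) (q + y.*2) : nat))); last first.
  by move=> x _; apply: eq_bigr => p _; rewrite (sum_peel (fun y => (Pn n.+1 a b g (p + x.*2) y : nat))).
rewrite (@sum_swap4 _ (fun p q x y => (Pn n.+1 a b g (p + x.*2) (q + y.*2) : nat))) big_distrr /=; apply: eq_bigr => p _.
rewrite big_distrr /=; apply: eq_bigr => q _.
rewrite big_distrr /=; apply: eq_bigr => x _.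
rewrite big_distrr /=; apply: eq_bigr => y _.
by rewrite PnS mulnb.
Qed.

Lemma Nn0 a b g : Nn 0 a b g = 1.
Proof. by rewrite /Nn expn0 !big_ord1 /Pn /nx /toNat !big_ord0 modn1. Qed.

Lemma Nn_par n a b g : odd a (+) odd b (+) odd g -> Nn n.+1 a b g = 0.
Proof. by rewrite NnS => ->. Qed.

Lemma main n a b g : Nn n.+1 a b g <= Nn n.+1 a a 0.
Proof.
elim: n a b g => [|n IH] a b g.
  rewrite !NnS addbb /= mul1n; case: (~~ _); rewrite ?mul0n // mul1n.
  by rewrite !big_bool /= !Nn0.
have pairB A B G : Nn n.+1 A B G + Nn n.+1 A B.+1 G <= Nn n.+1 A A 0.
  case H: (odd A (+) odd B (+) odd G).
    by rewrite Nn_par // add0n IH.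
  rewrite (@Nn_par _ A B.+1) ?addn0 ?IH //.
  by move: H; rewrite oddS; case: (odd A); case: (odd B); case: (odd G).
have pairG A B G : Nn n.+1 A B G + Nn n.+1 A B G.+1 <= Nn n.+1 A A 0.
  case H: (odd A (+) odd B (+) odd G).
    by rewrite Nn_par // add0n IH.
  rewrite (@Nn_par _ A B G.+1) ?addn0 ?IH //.
  by move: H; rewrite oddS; case: (odd A); case: (odd B); case: (odd G).
rewrite [X in _ <= X]NnS addbb /= mul1n NnS.
case Hp: (~~ _); rewrite ?mul0n // mul1n.
case Ha: (odd a).
  apply: leq_sum => p _; rewrite andbT.
  apply: (@leq_trans (Nn n.+1 (a./2 + p) (a./2 + p) 0)); last first.
    by rewrite big_bool /= !andbF !addn0; case: p => /=; rewrite ?addn0 ?leq_addr ?leq_addl.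
  move: Hp; rewrite Ha /=; case Hb: (odd b); case Hg: (odd g) => //= _.
    by rewrite big_bool /= !andbF !addn0 addnC addn1 pairB.
  rewrite big_bool /= ?andbT ?andbF !addn0.
  by case: p => /=; rewrite ?addn1 ?addn0 ?pairG // addnC pairG.
apply: leq_sum => p _; apply: leq_sum => q _.
by rewrite !andbF !addn0.
Qed.
Definition Rr n W := W./2 + odd W * 2^(n.-1).

Definition PXn n a b g x y : bool :=
  Rr n (nx n ((x + a) %% 2^n) ((y + b) %% 2^n)) == (Rr n (nx n x y) + g) %% 2^n.

Definition NXn n a b g := \sum_(x < 2^n) \sum_(y < 2^n) (PXn n a b g x y : nat).

Lemma Rr_bd m (s : bool) K : Rr m.+1 (s + K.*2) = K + s * 2^m.
Proof. by rewrite /Rr /= half_bit_double oddD odd_double addbF oddb. Qed.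

Lemma PXnS m a b g (p q : bool) x y : ~~ odd a ->
  PXn m.+1 a b g (p + x.*2) (q + y.*2) -> Pn m a./2 (b./2 + (q && odd b)) g x y.
Proof.
move=> Ha; rewrite /PXn /Pn !addmod !nxS !Rr_bd (negbTE Ha) andbF addn0.
move=> /eqP H; have := congr1 (fun t => t %% 2^m) H; rewrite /= (@modn_dvdm (2^m.+1)); last first.
  by rewrite expnS dvdn_mull.
rewrite [X in X %% _ = _]addnC modnMDl modn_small ?toNat_lt // => ->.
by rewrite addnAC [(_ + g) + _]addnC modnMDl.
Qed.

Lemma NX_bound m a b g : ~~ odd a ->
  NXn m.+1 a b g <= \sum_(p : bool) \sum_(q : bool) Nn m a./2 (b./2 + (q && odd b)) g.
Proof.
move=> Ha.
rewrite /NXn (sum_peel (fun x => \sum_(y < 2^m.+1) (PXn m.+1 a b g x y : nat))).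
rewrite (eq_bigr (fun x : 'I_(2^m) => \sum_(p : bool) \sum_(y < 2^m) \sum_(q : bool)
   (PXn m.+1 a b g (p + x.*2) (q + y.*2) : nat))); last first.
  by move=> x _; apply: eq_bigr => p _; rewrite (sum_peel (fun y => (PXn m.+1 a b g (p + x.*2) y : nat))).
rewrite (@sum_swap4 _ (fun p q x y => (PXn m.+1 a b g (p + x.*2) (q + y.*2) : nat))).
apply: leq_sum => p _; apply: leq_sum => q _; apply: leq_sum => x _; apply: leq_sum => y _.
have := @PXnS m a b g p q x y Ha.
by case: (PXn _ _ _ _ _ _) => // /(_ isT) ->.
Qed.

Lemma NnS_even m a : ~~ odd a -> Nn m.+1 a a 0 = 4 * Nn m a./2 a./2 0.
Proof.
move=> Ha; rewrite NnS (negbTE Ha) /= mul1n !big_bool /= !addn0.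
by move: (Nn _ _ _ _) => k; lia.
Qed.

Lemma XR_main m a b g : ~~ odd a -> NXn m.+2 a b g <= Nn m.+2 a a 0.
Proof.
move=> Ha; apply: (leq_trans (NX_bound _ _ _ Ha)); rewrite NnS_even //.
rewrite !big_bool /=.
have h1 := main m a./2 (b./2 + odd b) g; have h2 := main m a./2 (b./2 + 0) g.
lia.
Qed.

Lemma Rr_lt m W : W < 2^m.+1 -> Rr m.+1 W < 2^m.+1.
Proof.
rewrite /Rr /= expnS => H.
have : W./2 < 2^m by rewrite ltn_half_double -mul2n.
by case: (odd W) => /=; lia.
Qed.

Lemma Rr_inj m W1 W2 : W1 < 2^m.+1 -> W2 < 2^m.+1 -> Rr m.+1 W1 = Rr m.+1 W2 -> W1 = W2.
Proof.
rewrite /Rr /= => H1 H2 HR.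
have L1 : W1./2 < 2^m by rewrite ltn_half_double -mul2n -expnS.
have L2 : W2./2 < 2^m by rewrite ltn_half_double -mul2n -expnS.
rewrite -(odd_double_half W1) -(odd_double_half W2).
move: HR L1 L2; case: (odd W1); case: (odd W2) => /=; rewrite -!mul2n ?mul1n ?mul0n; lia.
Qed.

Lemma PX_eq m a x y : PXn m.+1 a a 0 x y = Pn m.+1 a a 0 x y.
Proof.
rewrite /PXn /Pn !addn0 !(modn_small (toNat_lt _)).
rewrite (modn_small (Rr_lt (toNat_lt _))) -/(nx _ x y).
apply/eqP/eqP => [|-> //]; apply: Rr_inj; exact: toNat_lt.
Qed.
Lemma toNat_addm n (x y : bv n) : toNat (addm x y) = (toNat x + toNat y) %% 2^n.
Proof. by rewrite /addm toNat_ofNat modn_mod. Qed.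

Lemma sum_bv n (G : nat -> nat) : \sum_(x < 2^n) G x = \sum_(u : bv n) G (toNat u).
Proof.
rewrite (reindex (fun u : bv n => Ordinal (toNat_lt u))) //=.
exists (fun i : 'I_(2^n) => ofNat n i) => [u _|i _]; first by rewrite ofNat_toNat.
by apply: val_inj; rewrite /= toNat_ofNat modn_small.
Qed.

Lemma card_transfer n (f : bv n -> bv n -> bv n) (F : nat -> nat -> nat) (a b c : bv n) :
  (forall u v, toNat (f u v) = F (toNat u) (toNat v)) ->
  #|[set p : bv n * bv n | f (addm p.1 a) (addm p.2 b) == addm (f p.1 p.2) c]| =
  \sum_(x < 2^n) \sum_(y < 2^n)
     (F ((x + toNat a) %% 2^n) ((y + toNat b) %% 2^n) == (F x y + toNat c) %% 2^n : nat).
Proof.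
move=> HF.
set H := fun x y => (F ((x + toNat a) %% 2^n) ((y + toNat b) %% 2^n) ==
    (F x y + toNat c) %% 2^n : nat).
rewrite (@sum_bv _ (fun x => \sum_(y < 2^n) H x y)).
rewrite (eq_bigr (fun u : bv n => \sum_(v : bv n) H (toNat u) (toNat v))); last first.
  by move=> u _; rewrite (@sum_bv _ (fun y => H (toNat u) y)).
rewrite (pair_bigA _ (fun u v => H (toNat u) (toNat v))).
rewrite -sum1_card big_mkcond /=; apply: eq_bigr => -[u v] _ /=.
rewrite in_set /= /H -(inj_eq (@toNat_inj n)) (HF (addm u a)) !toNat_addm (HF u). by case: (_ == _).
Qed.

Import Order.TTheory GRing.Theory Num.Theory.

Lemma toNat_splitl m (x : bv m.+1) :
  toNat x = x ord0 * 2^m + toNat [ffun i : 'I_m => x (lift ord0 i)].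
Proof.
rewrite /toNat big_ord_recl /= subn0; congr (_ + _); apply: eq_bigr => i _.
rewrite ffunE; congr (_ * 2 ^ _); rewrite /bump /=; have := ltn_ord i; lia.
Qed.

Lemma toNat_rot m (w : bv m.+1) : toNat (rotl w m) = Rr m.+1 (toNat w).
Proof.
rewrite toNat_splitl /Rr /= toNat_split half_bit_double oddD odd_double addbF oddb.
rewrite addnC; congr (_ + _ * _).
  congr toNat; apply/ffunP => i; rewrite !ffunE; congr (w _); apply: val_inj.
  rewrite val_insubd /= ltn_mod /bump /= add1n addSnnS addnC modnDl modn_small //.
  by have := ltn_ord i; lia.
rewrite ffunE /lo; congr (w _); apply: val_inj.
by rewrite val_insubd /= add0n modn_small // ltnSn.
Qed.

Lemma toNat_zero n : toNat (zero_bv n) = 0.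
Proof. by rewrite /toNat big1 // => i _; rewrite ffunE. Qed.

Lemma ratle k1 k2 D : k1 <= k2 -> (k1%:R / D%:R <= k2%:R / D%:R :> rat)%R.
Proof. by move=> H; rewrite ler_wpM2r ?invr_ge0 ?ler0n ?ler_nat. Qed.

Unset Implicit Arguments.
Set Strict Implicit. 

Theorem corollary4 (n : nat) (Hn : 2 <= n) (alpha : bv n.-1) :
  is_max_of (fun bc : bv n * bv n => adp_XR n.-1 (ext0 alpha) bc.1 bc.2)
            (adp_xor (ext0 alpha) (ext0 alpha) (zero_bv n)) /\
  is_max_of (fun bc : bv n * bv n => adp_xor (ext0 alpha) bc.1 bc.2)
            (adp_xor (ext0 alpha) (ext0 alpha) (zero_bv n)).
Proof.
case: n Hn alpha => [|[|m]] // _ alpha /=.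
set A := ext0 alpha.
have HA : ~~ odd (toNat A).
  rewrite toNat_split oddD odd_double addbF oddb /lo /A ffunE.
  by rewrite insubF //= ltnn.
have Exor b c : adp_xor A b c = ((Nn m.+2 (toNat A) (toNat b) (toNat c))%:R / (4^m.+2)%:R)%R.
  rewrite /adp_xor /adp (@card_transfer _ _ (nx m.+2)) //.
  by move=> u v; rewrite /nx !ofNat_toNat.
have Exr b c : adp_XR m.+1 A b c = ((NXn m.+2 (toNat A) (toNat b) (toNat c))%:R / (4^m.+2)%:R)%R.
  rewrite /adp_XR /adp (@card_transfer _ (fun x y => rotl (bxor x y) m.+1) (fun u v => Rr m.+2 (nx m.+2 u v))) //.
  by move=> u v; rewrite toNat_rot /nx !ofNat_toNat.
split; split.
- exists (A, zero_bv _); rewrite /= Exr Exor toNat_zero; congr (_%:R / _)%R.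
  by apply: eq_bigr => x _; apply: eq_bigr => y _; rewrite PX_eq.
- move=> [b c] /=; rewrite Exr Exor toNat_zero; apply: ratle; exact: XR_main.
- by exists (A, zero_bv _).
- move=> [b c] /=; rewrite !Exor toNat_zero; apply: ratle; exact: main.
Qed.
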